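(* Let $X$ be a generalized homology sphere of dimension $2n$. Suppose that for every vertex $v$ of $X$ one has $(-1)^nh_{\mathrm{Lk}_v}(-1)\geq0$. Then the coefficient of $t^n$ in $\gamma_X$ (its highest possible coefficient) is nonnegative.
   Context: Simplicial complexes contain the empty face; $\#\sigma$ is the number of vertices of $\sigma$. Link: $\mathrm{Lk}_\sigma=\{\tau\in X:\sigma\cup\tau\in X,\ \sigma\cap\tau=\emptyset\}$. Generalized homology sphere of dimension $m-1$: every link $\mathrm{Lk}_\sigma$ (including $\sigma=\emptyset$) has the homology of a sphere of dimension $m-1-\#\sigma$; links of vertices of $X$ are then generalized homology spheres of dimension $2n-1$. $f_X(t)=\sum_{\sigma\in X}t^{\#\sigma}$; for a generalized homology sphere of dimension $m-1$, $h_X$ is defined by $(1+t)^mh_X(\frac1{1+t})=t^mf_X(\frac1t)$ and $\gamma_X$ is the unique polynomial of degree at most $\lfloor m/2\rfloor$ with $h_X(t)=(1+t)^m\gamma_X(\frac{t}{(1+t)^2})$. *)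

(* Defs.v *)
From HB Require Import structures.
From mathcomp Require Import all_boot all_order all_algebra.
Set Implicit Arguments. Unset Strict Implicit. Unset Printing Implicit Defensive.
Import Order.TTheory GRing.Theory Num.Theory.
Local Open Scope ring_scope.

Section Complexes.
Variable V : finType.

Definition simplicial_complex (X : {set {set V}}) : Prop :=
  set0 \in X /\ forall s t : {set V}, s \in X -> t \subset s -> t \in X.

Definition link (X : {set {set V}}) (s : {set V}) : {set {set V}} :=
  [set t in X | (s :|: t \in X) && [disjoint s & t]].

Definition is_vertex (X : {set {set V}}) (v : V) : bool := [set v] \in X.

Variable k : fieldType.

Definition bsign (s : {set V}) (v : V) : k :=
  (-1) ^+ #|[set u in s | (enum_rank u < enum_rank v)%N]|.

(* Matrix (row convention) of the augmented simplicial boundary map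
   d_c : C_c -> C_(c-1), where C_c is spanned by the faces of X with c vertices
   (C_0 is spanned by the empty face).  Rows/columns are indexed by all
   subsets of V; rows/columns of non-faces or of faces of the wrong size are 0. *)
Definition bdmx (X : {set {set V}}) (c : nat) : 'M[k]_(#|[set: {set V}]|) :=
  \matrix_(i, j)
    (let s : {set V} := @enum_val _ (mem [set: {set V}]) i in
     let t : {set V} := @enum_val _ (mem [set: {set V}]) j in
     if [&& (0 < c)%N, s \in X, #|s| == c, t \subset s & #|t| == c.-1]
     then \sum_(v in s :\: t) bsign s v else 0).

Definition nfaces (X : {set {set V}}) (c : nat) : nat :=
  #|[set s in X | #|s| == c]|.

(* Dimension over k of the reduced homology of X in degree c-1
   (augmented chain complex; degree -1 corresponds to c = 0). *)
Definition rbetti (X : {set {set V}}) (c : nat) : nat :=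
  (nfaces X c - \rank (bdmx X c) - \rank (bdmx X c.+1))%N.

Definition homology_sphere_of_dim (X : {set {set V}}) (d : int) : Prop :=
  forall c : nat, rbetti X c = (if c%:Z == d + 1 then 1%N else 0%N).

Definition gen_homology_sphere (X : {set {set V}}) (d : int) : Prop :=
  simplicial_complex X /\
  forall s, s \in X -> homology_sphere_of_dim (link X s) (d - #|s|%:Z).

End Complexes.

Definition fpoly (V : finType) (X : {set {set V}}) : {poly rat} :=
  \sum_(s in X) 'X^#|s|.

Definition is_hpoly (m : nat) (f h : {poly rat}) : Prop :=
  forall x : rat, x != 0 -> x != -1 ->
    (1 + x) ^+ m * h.[(1 + x)^-1] = x ^+ m * f.[x^-1].

Definition is_gammapoly (m : nat) (h g : {poly rat}) : Prop :=
  (size g <= (m./2).+1)%N /\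
  forall x : rat, x != -1 -> h.[x] = (1 + x) ^+ m * g.[x / (1 + x) ^+ 2].

(* Main.v *)
Require Import Defs.
From HB Require Import structures.
From mathcomp Require Import all_boot all_order all_algebra.
From mathcomp Require Import ring lra zify.
Import Order.TTheory GRing.Theory Num.Theory.
Local Open Scope ring_scope.

Lemma poly_eq_pos (p q : {poly rat}) :
  (forall x : rat, 0 < x -> p.[x] = q.[x]) -> p = q.
Proof.
move=> H; apply/eqP; rewrite -subr_eq0; apply/negPn/negP => nz.
set rs := [seq (i.+1)%:R : rat | i <- iota 0 (size (p - q))].
have : (size rs < size (p - q)%R)%N.
  apply: max_poly_roots nz _ _.
    apply/allP => x /mapP [i _ ->]; rewrite /root !hornerE H ?subrr //.
  rewrite /rs map_inj_uniq ?iota_uniq // => i j /eqP; rewrite eqr_nat eqSS => /eqP //.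
by rewrite size_map size_iota ltnn.
Qed.

Lemma dbl (x : rat) (e : nat) : x * ((x ^+ e.-1) *+ e) = x ^+ e *+ e.
Proof. by case: e => [|e] //=; rewrite ?mulr0n ?mulr0 // mulrnAr -exprS. Qed.

Lemma term (x c : rat) (n i : nat) : x != -1 -> x + 2 != 0 -> (i <= n)%N ->
  (1 + x) ^+ (2 * n).+1 * ((1 + (1 + x)^-1) ^+ (2 * n).+1 *
     (c * ((1 + x)^-1 / (1 + (1 + x)^-1) ^+ 2) ^+ i))
  = (x + 2) * (c * ((x + 1) ^+ i * (x + 2) ^+ (2 * (n - i)))).
Proof.
move=> x1 a0 le.
have b0 : 1 + x != 0 by apply: contra x1; rewrite addrC addr_eq0.
have e : (1 + (1 + x)^-1) = (x + 2) / (1 + x) by field.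
have e2 : (1 + x)^-1 / ((x + 2) / (1 + x)) ^+ 2 = (1 + x) / (x + 2) ^+ 2.
  by field; rewrite a0 b0.
rewrite e e2 !expr_div_n -!exprM.
have -> : x + 1 = 1 + x by rewrite addrC.
have -> : (x + 2) ^+ (2 * n).+1 = (x + 2) * (x + 2) ^+ (2 * (n - i)) * (x + 2) ^+ (2 * i).
  by rewrite -mulrA -exprD -mulnDr subnK // exprS.
have p0 : (x + 2) ^+ (2 * i) != 0 by rewrite expf_neq0.
have q0 : (1 + x) ^+ (2 * n).+1 != 0 by rewrite expf_neq0.
move: p0 q0.
set P := (x + 2) ^+ (2 * i). set Q := (1 + x) ^+ _. set R := (x + 2) ^+ (2 * (n - i)).
set S := (1 + x) ^+ i.
move=> p0 q0.
field.
by rewrite p0 q0.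
Qed.

Lemma powB (x : rat) (N j : nat) : x != 0 -> (j <= N)%N -> x ^+ N * x^-1 ^+ j = x ^+ (N - j).
Proof. by move=> x0 le; rewrite exprB ?unitfE // exprVn. Qed.

Lemma term2 (x : rat) (N j : nat) : x != 0 -> x != -1 -> (j <= N)%N ->
  (1 + x) ^+ N * ((1 + x)^-1 ^+ j * (1 - (1 + x)^-1) ^+ (N - j)) = x ^+ N * x^-1 ^+ j.
Proof.
move=> x0 x1 le.
have b0 : 1 + x != 0 by apply: contra x1; rewrite addrC addr_eq0.
have -> : 1 - (1 + x)^-1 = x / (1 + x) by field.
rewrite expr_div_n !exprVn.
have -> : (1 + x) ^+ N = (1 + x) ^+ (N - j) * (1 + x) ^+ j by rewrite -exprD subnK.
have -> : x ^+ N = x ^+ (N - j) * x ^+ j by rewrite -exprD subnK.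
have p0 : (1 + x) ^+ j != 0 by rewrite expf_neq0.
have q0 : (1 + x) ^+ (N - j) != 0 by rewrite expf_neq0.
have r0 : x ^+ j != 0 by rewrite expf_neq0.
move: p0 q0 r0.
set P := (1 + x) ^+ j. set Q := (1 + x) ^+ (N - j). set R := x ^+ j. set S := x ^+ (N - j).
move=> p0 q0 r0.
by field; rewrite p0 q0 r0.
Qed.

Lemma sgn_term (N j : nat) : ~~ odd N -> (j <= N)%N ->
  (-1) ^+ j * 2 ^+ (N - j) = (-2 : rat) ^+ (N - j).
Proof.
move=> hN le.
have -> : (-2 : rat) = -1 * 2 by rewrite mulN1r.
rewrite exprMn; congr (_ * _).
by rewrite -signr_odd -[in RHS]signr_odd oddB // (negbTE hN).
Qed.

Lemma half_odd n : ((2 * n).+1)./2 = n.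
Proof. by rewrite mul2n -[(n.*2).+1]/(true + n.*2)%N half_bit_double. Qed.

Theorem corollary2p2p2 (k : fieldType) (V : finType) (X : {set {set V}}) (n : nat) :
  gen_homology_sphere k X (2 * n)%N%:Z ->
  (forall v : V, is_vertex X v ->
     forall hv : {poly rat}, is_hpoly (2 * n) (fpoly (link X [set v])) hv ->
       0 <= (-1) ^+ n * hv.[-1]) ->
  forall h g : {poly rat},
    is_hpoly (2 * n).+1 (fpoly X) h ->
    is_gammapoly (2 * n).+1 h g ->
    0 <= g`_n.
Proof.
move=> [[X0 Xdown] _] Hlink h g hX [gsz hG].
rewrite half_odd in gsz.
set m := (2 * n).+1.
pose Q : {poly rat} := \sum_(i < n.+1) g`_i *: (('X + 1) ^+ i * ('X + 2) ^+ (2 * (n - i))).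
pose P : {poly rat} := \sum_(t in X) 'X^(m - #|t|).
have h2 : forall x : rat, (2 : {poly rat}).[x] = 2 by move=> x; rewrite !hornerE.
have fpE : forall y : rat, (fpoly X).[y] = \sum_(t in X) y ^+ #|t|.
  by move=> y; rewrite /fpoly horner_sum; apply: eq_bigr => t _; rewrite hornerXn.
have QE : forall x : rat, Q.[x] = \sum_(i < n.+1) g`_i * ((x + 1) ^+ i * (x + 2) ^+ (2 * (n - i))).
  by move=> x; rewrite /Q horner_sum; apply: eq_bigr => i _; rewrite !hornerE.
have key : forall x : rat, x != 0 -> x != -1 -> x + 2 != 0 ->
    x ^+ m * (fpoly X).[x^-1] = (x + 2) * Q.[x].
  move=> x x0 x1 x2.
  have b0 : 1 + x != 0 by apply: contra x1; rewrite addrC addr_eq0.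
  have y1 : (1 + x)^-1 != -1.
    apply: contra x2 => /eqP e; apply/eqP.
    have : 1 + x = -1 by rewrite -[1 + x]invrK e invrN invr1.
    by move=> e2; rewrite -[x](addKr 1) e2; rewrite addrC; apply/eqP.
  rewrite -hX // hG // (horner_coef_wide _ gsz) QE mulr_sumr mulr_sumr mulr_sumr.
  apply: eq_bigr => i _; rewrite -term //; last by rewrite -ltnS.
have bound : forall t, t \in X -> (#|t| <= m)%N.
  move=> t0 Xt0; rewrite leqNgt; apply/negP => lt.
  pose d := #|V|.
  have cardV : forall t : {set V}, (#|t| <= d)%N by move=> t; apply: max_card.
  pose PN : {poly rat} := \sum_(t in X) 'X^(d + m - #|t|).
  have PNE : PN = 'X^d * (('X + 2) * Q).
    apply: poly_eq_pos => x xp.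
    have x0 : x != 0 by rewrite gt_eqF.
    have x1 : x != -1 by apply/eqP => e; move: xp; rewrite e => hh; lra.
    have x2 : x + 2 != 0 by rewrite gt_eqF // addr_gt0.
    rewrite hornerM hornerXn hornerM hornerD hornerX h2 -key // fpE.
    rewrite mulr_sumr mulr_sumr horner_sum; apply: eq_bigr => t Xt.
    rewrite hornerXn mulrA -exprD powB //.
    exact: (leq_trans (cardV t) (leq_addr _ _)).
  have := congr1 (fun p : {poly rat} => p`_(d + m - #|t0|)) PNE.
  rewrite /= coefXnM ifT; last first.
    by have := cardV t0; rewrite /m in lt *; lia.
  rewrite /PN coef_sum (bigD1 t0) //= coefXn eqxx.
  set S := \sum_(_ | _) _.
  have S0 : 0 <= S by apply: sumr_ge0 => i _; rewrite coefXn ler0n.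
  move=> e; have e1 : 1 + S = 0 := e.
  move: S0; have -> : S = -1 by rewrite -[S]add0r -(subrr 1) addrAC e1 add0r.
  by rewrite ler0N1.
have PQ : P = ('X + 2) * Q.
  apply: poly_eq_pos => x xp.
  have x0 : x != 0 by rewrite gt_eqF.
  have x1 : x != -1 by apply/eqP => e; move: xp; rewrite e => hh; lra.
  have x2 : x + 2 != 0 by rewrite gt_eqF // addr_gt0.
  rewrite hornerM hornerD hornerX h2 -key // fpE mulr_sumr /P horner_sum.
  by apply: eq_bigr => t Xt; rewrite hornerXn powB // bound.
have Qm2 : Q.[-2] = g`_n * (-1) ^+ n.
  rewrite QE big_ord_recr /= big1 ?add0r; last first.
    move=> i _; rewrite addNr expr0n muln_eq0 /= subn_eq0 leqNgt ltn_ord /=.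
    by rewrite mulr0 mulr0.
  have -> : (-2 + 1 : rat) = -1 by apply/eqP.
  by rewrite addNr subnn muln0 expr0 mulr1.
have Pm2 : P.[-2] = 0.
  by rewrite PQ hornerM hornerD hornerX h2 addNr mul0r.
have dPm2 : P^`().[-2] = Q.[-2].
  rewrite PQ derivM derivD derivX derivMn derivC mul0rn hornerD hornerM hornerM addr0 hornerD hornerX h2 addNr mul0r addr0.
  by rewrite hornerE mul1r.
pose A := \sum_(t in X) (-2 : rat) ^+ (m - #|t|) *+ #|t|.
have AE : A = 2 * P^`().[-2].
  have Pd : P^`().[-2] = \sum_(t in X) (-2) ^+ ((m - #|t|).-1) *+ (m - #|t|).
    rewrite /P (big_morph _ (@derivD _) (@deriv0 _)) horner_sum; apply: eq_bigr => t _.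
    by rewrite derivXn hornerMn hornerXn.
  have PdE : -2 * P^`().[-2] = \sum_(t in X) (-2) ^+ (m - #|t|) *+ (m - #|t|).
    by rewrite Pd mulr_sumr; apply: eq_bigr => t _; apply: dbl.
  have S0 : \sum_(t in X) (-2) ^+ (m - #|t|) *+ (m - #|t|) + A = 0.
    rewrite /A -big_split /=; transitivity (P.[-2] *+ m); last by rewrite Pm2 mul0rn.
    rewrite /P horner_sum -sumrMnl; apply: eq_bigr => t Xt.
    by rewrite hornerXn -mulrnDr subnK ?bound.
  move/eqP: S0; rewrite addrC addr_eq0 => /eqP ->.
  by rewrite -PdE mulNr opprK.
pose hv (v : V) : {poly rat} :=
  \sum_(s in link X [set v]) 'X^#|s| * (1 - 'X) ^+ (2 * n - #|s|).
have linkP : forall v s, (s \in link X [set v]) = [&& s \in X, v |: s \in X & v \notin s].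
  by move=> v s; rewrite /link inE disjoints1.
have linkB : forall v s, s \in link X [set v] -> (#|s| <= 2 * n)%N.
  move=> v s; rewrite linkP => /and3P [_ Xs vs].
  by have := bound _ Xs; rewrite cardsU1 vs.
have hvE : forall v, (hv v).[-1] = \sum_(t | (t \in X) && (v \in t)) (-2 : rat) ^+ (m - #|t|).
  move=> v; rewrite /hv horner_sum.
  transitivity (\sum_(s in link X [set v]) (-2 : rat) ^+ (2 * n - #|s|)).
    apply: eq_bigr => s Ls.
    rewrite hornerM hornerXn horner_exp hornerD hornerN hornerX hornerC.
    have -> : (1 - -1 : rat) = 2 by apply/eqP.
    by rewrite sgn_term ?(linkB _ _ Ls) // oddM.
  symmetry; rewrite (reindex_onto (fun s => v |: s) (fun t => t :\ v)) /=; last first.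
    by move=> t /andP [_ vt]; rewrite setD1K.
  apply: eq_big => s.
    case vs: (v \in s).
      have -> : ((v |: s) :\ v == s) = false.
        by apply/negbTE/eqP => e; move: vs; rewrite -e setD11.
      by rewrite linkP vs !andbF.
    rewrite setU1K ?vs // eqxx linkP vs setU11 !andbT.
    case X1: (v |: s \in X); rewrite ?andbF //=.
    by rewrite (Xdown _ _ X1) // subsetUr.
  move=> /andP [_ /eqP e].
  have vs : v \notin s by rewrite -e setD11.
  by rewrite cardsU1 vs add1n /m subSS.
have hvpos : forall v, 0 <= (-1) ^+ n * (hv v).[-1].
  move=> v; case: (boolP (is_vertex X v)) => vv.
    apply: (Hlink v vv) => x x0 x1.
    rewrite /fpoly /hv !horner_sum !mulr_sumr; apply: eq_bigr => s Ls.
    rewrite hornerM hornerXn horner_exp hornerD hornerN hornerX hornerC hornerXn.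
    by rewrite term2 // (linkB _ _ Ls).
  rewrite hvE big1 ?mulr0 // => t /andP [Xt vt].
  exfalso; move/negP: vv; apply; rewrite /is_vertex.
  by apply: (Xdown _ _ Xt); rewrite sub1set.
have sumE : \sum_v (hv v).[-1] = A.
  under eq_bigr do rewrite hvE.
  rewrite (exchange_big_dep (fun t => t \in X)) /=; last by move=> v t _ /andP [].
  apply: eq_bigr => t Xt.
  rewrite -sumr_const; apply: eq_bigl => v; by rewrite Xt.
have : 0 <= \sum_v (-1) ^+ n * (hv v).[-1] by apply: sumr_ge0 => v _; apply: hvpos.
rewrite -mulr_sumr sumE AE dPm2 Qm2.
have -> : (-1) ^+ n * (2 * (g`_n * (-1) ^+ n)) = 2 * g`_n :> rat.
  have s2 : (-1) ^+ n * (-1) ^+ n = 1 :> rat by rewrite -exprD -signr_odd oddD addbb.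
  transitivity (2 * g`_n * ((-1) ^+ n * (-1) ^+ n)); first by ring.
  by rewrite s2 mulr1.
by rewrite pmulr_rge0.
Qed.
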